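(* Let $G=(V,E)$ be a finite connected undirected graph with probability weights $w:E\to\mathbb{R}_{>0}$ and degree weights $\omega:E\to\mathbb{R}$, and let $r\in V$ be arbitrary. Let $T$ be a random spanning tree of $G$ with $\Pr(T)\propto\prod_{e\in E_T}w(e)$. For a node $v\in V$, $$\mathbb{E}\big[\deg^{\omega}_T(v)\big]=\operatorname{Tr}\Big[\big(L^{(1)}_v\big)^{[r]}\big(L_G^{[r]}\big)^{-1}\Big],$$ $$\operatorname{Var}\big[\deg^{\omega}_T(v)\big]=\operatorname{Tr}\Big[\Big(\big(L^{(2)}_v\big)^{[r]}-\big(L^{(1)}_v\big)^{[r]}\big(L_G^{[r]}\big)^{-1}\big(L^{(1)}_v\big)^{[r]}\Big)\big(L_G^{[r]}\big)^{-1}\Big].$$ Moreover, for a second node $u\in V$, $u\neq v$, $$\operatorname{Cov}\big(\deg^{\omega}_T(v),\deg^{\omega}_T(u)\big)=\operatorname{Tr}\Big[\Big(\big(L^{(2)}_{vu}\big)^{[r]}-\big(L^{(1)}_v\big)^{[r]}\big(L_G^{[r]}\big)^{-1}\big(L^{(1)}_u\big)^{[r]}\Big)\big(L_G^{[r]}\big)^{-1}\Big].$$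
   Context: For an edge weight function $c:E\to\mathbb{R}$ on $G$, its Laplacian is $L=D-A$ where $A_{ij}=c(\{i,j\})$ (zero if $\{i,j\}\notin E$) and $D$ is diagonal with $D_{ii}=\sum_j A_{ij}$. $L_G$ is the Laplacian for the weights $w$. For a node $v$ and $p\in\{1,2\}$, $L^{(p)}_v$ is the Laplacian for the weights $c(e)=w(e)\omega(e)^p$ if $v\in e$ and $c(e)=0$ otherwise (i.e. only edges incident to $v$ kept, with weights scaled by $\omega^p$). $L^{(2)}_{vu}$ is the Laplacian for the weights $c(\{u,v\})=w(\{u,v\})\omega(\{u,v\})^2$ and $c(e)=0$ for all other edges (the zero matrix if $\{u,v\}\notin E$). For a matrix $M$ indexed by $V$, $M^{[r]}$ is $M$ with the row and column indexed by $r$ removed. The weighted degree of $v$ in $T$ is $\deg^{\omega}_T(v)=\sum_{e\in E_T,\, v\in e}\omega(e)$, and $\operatorname{Tr}$ is the trace. *)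

(* Defs.v *)
From HB Require Import structures.
From mathcomp Require Import all_boot all_order all_algebra.
Set Implicit Arguments. Unset Strict Implicit. Unset Printing Implicit Defensive.
Import Order.TTheory GRing.Theory Num.Theory.
Local Open Scope ring_scope.

(* The vertex set is 'I_n.+1; an undirected simple graph is a set E of
   2-element subsets of vertices (its edges). *)
Section Defs.
Variable n : nat.
Notation V := 'I_n.+1.
Notation edge := {set V}.

Definition simple_graph (E : {set edge}) : Prop :=
  forall e, e \in E -> #|e| = 2%N.

Definition edge_rel (F : {set edge}) : rel V := fun x y => [set x; y] \in F.

Definition connectedb (F : {set edge}) : bool :=
  [forall x : V, forall y : V, connect (edge_rel F) x y].

(* acyclic: every edge of F is a bridge of F *)
Definition acyclic (F : {set edge}) : bool :=
  [forall x : V, forall y : V, ([set x; y] \in F) ==>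
    ~~ connect (edge_rel (F :\ [set x; y])) x y].

Definition spanning_tree (E F : {set edge}) : bool :=
  [&& F \subset E, connectedb F & acyclic F].

Definition spanning_trees (E : {set edge}) : {set {set edge}} :=
  [set F | spanning_tree E F ].

Variable R : realFieldType.

Definition tree_weight (w : edge -> R) (F : {set edge}) : R := \prod_(e in F) w e.

Definition tree_expect (E : {set edge}) (w : edge -> R) (X : {set edge} -> R) : R :=
  (\sum_(F in spanning_trees E) tree_weight w F * X F) /
  (\sum_(F in spanning_trees E) tree_weight w F).

Definition tree_var E w (X : {set edge} -> R) : R :=
  tree_expect E w (fun F => X F ^+ 2) - (tree_expect E w X) ^+ 2.

Definition tree_cov E w (X Y : {set edge} -> R) : R :=
  tree_expect E w (fun F => X F * Y F) - tree_expect E w X * tree_expect E w Y.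

Definition wdeg (om : edge -> R) (F : {set edge}) (v : V) : R :=
  \sum_(e in F | v \in e) om e.

Definition adjw (E : {set edge}) (c : edge -> R) : 'M[R]_n.+1 :=
  \matrix_(i, j) (if [set i; j] \in E then c [set i; j] else 0).

Definition laplacian (E : {set edge}) (c : edge -> R) : 'M[R]_n.+1 :=
  \matrix_(i, j) ((i == j)%:R * (\sum_k adjw E c i k) - adjw E c i j).

Definition lapv (E : {set edge}) (w om : edge -> R) (p : nat) (v : V) :=
  laplacian E (fun e => if v \in e then w e * om e ^+ p else 0).

Definition lapvu (E : {set edge}) (w om : edge -> R) (v u : V) :=
  laplacian E (fun e => if e == [set v; u] then w e * om e ^+ 2 else 0).

Definition delrc (r : V) (M : 'M[R]_n.+1) : 'M[R]_n := row' r (col' r M).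

End Defs.

(* Main.v *)
Require Import Defs.
From HB Require Import structures.
From mathcomp Require Import all_boot all_order all_algebra all_fingroup.
From mathcomp Require Import zify ring lra.
Set Implicit Arguments. Unset Strict Implicit. Unset Printing Implicit Defensive.
Import Order.TTheory GRing.Theory Num.Theory.

Section Graph.
Variable n : nat.
Notation V := 'I_n.+1.
Variable r : V.

Lemma erel_sym (F : {set {set V}}) : symmetric (edge_rel F).
Proof. by move=> x y; rewrite /edge_rel setUC. Qed.

Lemma econn_sym (F : {set {set V}}) x y : connect (edge_rel F) x y = connect (edge_rel F) y x.
Proof. exact: (sym_connect_sym (erel_sym F)). Qed.

Lemma connectedbP (F : {set {set V}}) :
  reflect (forall x y, connect (edge_rel F) x y) (connectedb F).
Proof.
apply: (iffP forallP) => [h x y|h x]; first by move/forallP: (h x); apply.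
by apply/forallP => y; apply: h.
Qed.

Lemma connected_r (F : {set {set V}}) :
  (forall x, connect (edge_rel F) x r) -> connectedb F.
Proof.
move=> h; apply/connectedbP => x y.
by apply: (connect_trans (h x)); rewrite econn_sym.
Qed.

Fixpoint Nl (F : {set {set V}}) (k : nat) : {set V} :=
  if k is k'.+1 then Nl F k' :|: [set x | [exists y in Nl F k', edge_rel F y x]]
  else [set r].

Lemma Nl_mono F k k' : (k <= k')%N -> Nl F k \subset Nl F k'.
Proof.
move/subnK => <-; elim: (k' - k)%N => [|d IH] //=.
by apply: (subset_trans IH); apply: subsetUl.
Qed.

Lemma path_Nl F p : path (edge_rel F) r p -> last r p \in Nl F (size p).
Proof.
elim/last_ind: p => [|p z IH]; first by rewrite /= set11.
rewrite rcons_path last_rcons size_rcons => /andP[/IH h e] /=.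
by rewrite inE; apply/orP; right; rewrite inE; apply/existsP; exists (last r p); rewrite h.
Qed.

Lemma conn_Nl F x : connect (edge_rel F) r x -> x \in Nl F n.
Proof.
move/connectP => [p pp ->].
case: (shortenP pp) => p' pp' up' _.
have sz : (size p' <= n)%N.
  have := max_card (mem (r :: p')); rewrite card_ord (card_uniqP up') /=.
  by [].
by apply: (subsetP (Nl_mono F sz)); apply: path_Nl.
Qed.

Definition lvl F (x : V) : nat := find (fun k => x \in Nl F k) (iota 0 n.+1).

Lemma lvl_in F x : connectedb F -> x \in Nl F (lvl F x).
Proof.
move/connectedbP => c.
have hs : has (fun k => x \in Nl F k) (iota 0 n.+1).
  by apply/hasP; exists n; rewrite ?mem_iota //=; last exact: (conn_Nl (c r x)).
have := nth_find 0%N hs; rewrite nth_iota //.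
by rewrite -[X in (_ < X)%N](size_iota 0 n.+1) -has_find.
Qed.

Lemma lvl_min F x k : connectedb F -> x \in Nl F k -> (lvl F x <= k)%N.
Proof.
move=> c xk; rewrite leqNgt; apply/negP => lt.
have lkn : (k < n.+1)%N.
  apply: (leq_trans lt); rewrite -[X in (_ <= X)%N](size_iota 0 n.+1); exact: find_size.
have := before_find 0%N lt; rewrite nth_iota // add0n xk.
by [].
Qed.

Definition par F (x : V) : V := odflt r [pick y | edge_rel F y x && (lvl F y < lvl F x)%N].

Lemma par_spec F x : connectedb F -> x != r ->
  edge_rel F (par F x) x && (lvl F (par F x) < lvl F x)%N.
Proof.
move=> c xr; rewrite /par; case: pickP => [y //|none]; exfalso.
have xin := lvl_in x c.
move: xin; case e: (lvl F x) => [|d] /=.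
  by rewrite inE (negbTE xr).
rewrite inE => /orP[xd|].
  by have := lvl_min c xd; rewrite e ltnn.
rewrite inE => /existsP[y /andP[yd eyx]].
have := none y; rewrite eyx /= e ltnS.
by rewrite (lvl_min c yd).
Qed.

Lemma par_edge F x : connectedb F -> x != r -> [set x; par F x] \in F.
Proof. by move=> c xr; have /andP[e _] := par_spec c xr; rewrite setUC. Qed.

Lemma par_lt F x : connectedb F -> x != r -> (lvl F (par F x) < lvl F x)%N.
Proof. by move=> c xr; have /andP[_ e] := par_spec c xr. Qed.

Lemma liftnr (i : 'I_n) : lift r i != r.
Proof. by rewrite eq_sym neq_lift. Qed.

Definition pe F (i : 'I_n) : {set V} := [set lift r i; par F (lift r i)].

Lemma pe_inj F : connectedb F -> injective (pe F).
Proof.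
move=> c i j eq; apply/eqP/negPn/negP => nij.
have nab : lift r i != lift r j by rewrite (inj_eq (@lift_inj _ r)).
have ha : lift r i = par F (lift r j).
  have : lift r i \in pe F j by rewrite -eq !inE eqxx.
  by rewrite !inE (negbTE nab) => /eqP.
have hb : lift r j = par F (lift r i).
  have : lift r j \in pe F i by rewrite eq !inE eqxx.
  by rewrite !inE eq_sym (negbTE nab) => /eqP.
have l1 := par_lt c (liftnr i); have l2 := par_lt c (liftnr j).
rewrite -ha in l2; rewrite -hb in l1.
by have := ltn_trans l1 l2; rewrite ltnn.
Qed.

Lemma pe_in F i : connectedb F -> pe F i \in F.
Proof. by move=> c; apply: par_edge => //; apply: liftnr. Qed.

Definition peS F := [set pe F i | i : 'I_n].

Lemma peS_conn F : connectedb F -> connectedb (peS F).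
Proof.
move=> c; apply: connected_r => x.
move: {2}(lvl F x) (leqnn (lvl F x)) => k; elim: k x => [|k IH] x lx.
  move: lx; case: (unliftP r x) => [j ->|-> //] lx.
  by have := leq_trans (par_lt c (liftnr j)) lx.
move: lx; case: (unliftP r x) => [j ->|-> //] lx.
have l := par_lt c (liftnr j).
have h2 : connect (edge_rel (peS F)) (par F (lift r j)) r.
  by apply: IH; rewrite -ltnS (leq_trans l lx).
apply: connect_trans h2; apply: connect1; rewrite /edge_rel; apply/imsetP; exists j => //.
Qed.


Lemma conn_sub (F F' : {set {set V}}) a b : F \subset F' -> connect (edge_rel F) a b -> connect (edge_rel F') a b.
Proof.
move=> sFF'; apply: connect_sub => u v uv; apply: connect1.
by rewrite /edge_rel (subsetP sFF').
Qed.

Lemma reroute (F : {set {set V}}) x y : connect (edge_rel (F :\ [set x; y])) x y ->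
  forall a b, connect (edge_rel F) a b -> connect (edge_rel (F :\ [set x; y])) a b.
Proof.
move=> cxy a b; apply: connect_sub => u v; rewrite /edge_rel => uv.
case: (eqVneq [set u; v] [set x; y]) => h.
- case: (eqVneq u v) => [-> | nuv]; first exact: connect0.
  have : u \in [set x; y] by rewrite -h !inE eqxx.
  have : v \in [set x; y] by rewrite -h !inE eqxx orbT.
  rewrite !inE => /orP[]/eqP hv /orP[]/eqP hu; subst;
    first [by rewrite eqxx in nuv | done | by rewrite econn_sym].
- by apply: connect1; rewrite /edge_rel in_setD1 h uv.
Qed.

Lemma reroute_conn (F : {set {set V}}) x y : connectedb F -> connect (edge_rel (F :\ [set x; y])) x y ->
  connectedb (F :\ [set x; y]).
Proof.
move=> /connectedbP c cxy; apply/connectedbP => a b.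
exact: reroute cxy _ _ (c a b).
Qed.

Lemma card_peS (F : {set {set V}}) : connectedb F -> #|peS F| = n.
Proof. by move=> c; rewrite card_imset ?card_ord //; apply: pe_inj. Qed.

Lemma peS_sub (F : {set {set V}}) : connectedb F -> peS F \subset F.
Proof. by move=> c; apply/subsetP => e /imsetP[i _ ->]; apply: pe_in. Qed.

Lemma tree_peS (E T : {set {set V}}) : (forall e, e \in E -> #|e| = 2%N) ->
  spanning_tree E T -> peS T = T.
Proof.
move=> simple /and3P[sTE cT aT].
apply/eqP; rewrite eqEsubset peS_sub //=.
apply/subsetP => e eT; apply/negPn/negP => ne.
have /cards2P [x [y [nxy exy]]] : #|e| == 2%N by rewrite simple // (subsetP sTE).
move/forallP: aT => /(_ x)/forallP/(_ y); rewrite -exy eT /= => /negP; apply.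
have := connectedbP _ (peS_conn cT) x y.
apply: conn_sub; apply/subsetP => f fS; rewrite in_setD1 (subsetP (peS_sub cT)) // andbT.
by apply/eqP => fe; move: ne; rewrite -fe fS.
Qed.

Lemma card_tree (E T : {set {set V}}) : (forall e, e \in E -> #|e| = 2%N) ->
  spanning_tree E T -> #|T| = n.
Proof.
move=> simple st; rewrite -(tree_peS simple st) card_peS //.
by case/and3P: st.
Qed.

Lemma tree_exists (E : {set {set V}}) : connectedb E -> exists T, T \in spanning_trees E.
Proof.
move=> cE.
have P0 : (E \subset E) && connectedb E by rewrite subxx.
case: (@arg_minnP _ E (fun F : {set {set V}} => (F \subset E) && connectedb F) (fun F : {set {set V}} => #|F|) P0) => T /andP[sTE cT] mn.
exists T; rewrite inE /spanning_tree sTE cT /=.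
apply/forallP => x; apply/forallP => y; apply/implyP => eT; apply/negP => cxy.
have cT' := reroute_conn cT cxy.
have := mn (T :\ [set x; y]); rewrite cT' andbT.
rewrite (subset_trans _ sTE) ?subsetDl // => /(_ isT).
by rewrite [X in (X <= _)%N](cardsD1 [set x; y] T) eT add1n ltnn.
Qed.

Lemma classify (E : {set {set V}}) (f : {ffun 'I_n -> {set V}}) : (forall e, e \in E -> #|e| = 2%N) ->
  (forall i, f i \in E) -> (forall i, lift r i \in f i) -> injective f ->
  connectedb [set f i | i : 'I_n] ->
  spanning_tree E [set f i | i : 'I_n] /\ f = [ffun i => pe [set f i | i : 'I_n] i].
Proof.
set S := [set f i | i : 'I_n] => simple fE fv finj cS.
have cardS : #|S| = n by rewrite card_imset ?card_ord.
have sSE : S \subset E by apply/subsetP => e /imsetP[i _ ->].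
have aS : acyclic S.
  apply/forallP => x; apply/forallP => y; apply/implyP => eS; apply/negP => cxy.
  have cS' := reroute_conn cS cxy.
  have h1 := subset_leq_card (peS_sub cS'); rewrite card_peS // in h1.
  have h2 := cardsD1 [set x; y] S; rewrite eS cardS /= in h2.
  move: h1 h2; set k := #|S :\ [set x; y]|; set m := n.
  lia.
have st : spanning_tree E S by rewrite /spanning_tree sSE cS aS.
split => //.
have pS := tree_peS simple st.
apply/ffunP => i; rewrite ffunE; apply/eqP/negPn/negP => ni.
case: (@arg_maxnP _ i (fun i : 'I_n => f i != pe S i) (fun i : 'I_n => lvl S (lift r i)) ni) => k nk mx.
have : f k \in peS S by rewrite pS; apply: imset_f.
case/imsetP => j _ fkj.
have : lift r k \in pe S j by rewrite -fkj.
rewrite !inE => /orP[/eqP|/eqP] h.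
  by move/lift_inj: h fkj => <-; move/eqP: nk.
have nj : f j != pe S j.
  apply/eqP => fj; have jk : j = k by apply: finj; rewrite fj fkj.
  by subst j; have := par_lt cS (liftnr k); rewrite -h ltnn.
have hle : (lvl S (lift r j) <= lvl S (lift r k))%N := mx j nj.
have := par_lt cS (liftnr j); rewrite -h => hl.
by have := leq_ltn_trans hle hl; rewrite ltnn.
Qed.

End Graph.

Local Open Scope ring_scope.

Lemma det_sum_rank1 (R' : comPzRingType) (n : nat) (I : finType)
  (c : I -> R') (b : I -> 'I_n -> R') :
  \det (\matrix_(i, j) \sum_e c e * b e i * b e j) =
  \sum_(f : {ffun 'I_n -> I})
     (\prod_i (c (f i) * b (f i) i)) * \det (\matrix_(i, j) b (f i) j).
Proof.
rewrite /determinant.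
under eq_bigr => s _.
  rewrite (eq_bigr (fun i => \sum_e c e * b e i * b e (s i))); last first.
    by move=> i _; rewrite mxE.
  rewrite bigA_distr_bigA big_distrr /=.
  over.
rewrite exchange_big /=; apply: eq_bigr => f _.
rewrite big_distrr /=; apply: eq_bigr => s _.
rewrite mulrCA; congr (_ * _).
rewrite -big_split /=; apply: eq_bigr => i _.
by rewrite mxE.
Qed.


Section Lap.
Variable n : nat.
Notation V := 'I_n.+1.
Variable R' : comPzRingType.

Definition gadj (E : {set {set V}}) (c : {set V} -> R') : 'M[R']_n.+1 :=
  \matrix_(i, j) (if [set i; j] \in E then c [set i; j] else 0).
Definition glap (E : {set {set V}}) (c : {set V} -> R') : 'M[R']_n.+1 :=
  \matrix_(i, j) ((i == j)%:R * (\sum_k gadj E c i k) - gadj E c i j).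

Definition sg (e : {set V}) (x : V) : R' :=
  if x \in e then (if [exists y in e, (y < x)%N] then -1 else 1) else 0.

Definition cE (E : {set {set V}}) (c : {set V} -> R') e := if e \in E then c e else 0.

Lemma two_elt (e : {set V}) : #|e| = 2%N -> exists x y, x != y /\ e = [set x; y].
Proof. by move=> h; apply/cards2P; rewrite h. Qed.

Lemma sg_sq (e : {set V}) x : x \in e -> sg e x * sg e x = 1.
Proof. by rewrite /sg => ->; case: ifP => _; rewrite ?mulrNN mulr1. Qed.

Lemma sg_pair (x y : V) : x != y -> sg [set x; y] x * sg [set x; y] y = -1.
Proof.
move=> nxy; rewrite /sg !inE !eqxx orbT /=.
have [lxy|lyx|exy] := ltngtP (val x) (val y).
- have -> : [exists z in [set x; y], (z < x)%N] = false.
    apply/negbTE/existsP => -[z]; rewrite !inE => /andP[/orP[]/eqP-> ].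
      by rewrite ltnn.
    by rewrite ltnNge ltnW.
  have -> : [exists z in [set x; y], (z < y)%N] by apply/existsP; exists x; rewrite !inE eqxx.
  by rewrite /= ?mul1r ?mulr1.
- have -> : [exists z in [set x; y], (z < y)%N] = false.
    apply/negbTE/existsP => -[z]; rewrite !inE => /andP[/orP[]/eqP-> ].
      by rewrite ltnNge ltnW.
    by rewrite ltnn.
  have -> : [exists z in [set x; y], (z < x)%N] by apply/existsP; exists y; rewrite !inE eqxx orbT.
  by rewrite /= ?mul1r ?mulr1.
- by move/val_inj: exy nxy => ->; rewrite eqxx.
Qed.

Lemma sg_sum (x y : V) : x != y -> sg [set x; y] x + sg [set x; y] y = 0.
Proof.
move=> nxy; rewrite /sg !inE !eqxx orbT /=.
have [lxy|lyx|exy] := ltngtP (val x) (val y).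
- have -> : [exists z in [set x; y], (z < x)%N] = false.
    apply/negbTE/existsP => -[z]; rewrite !inE => /andP[/orP[]/eqP-> ].
      by rewrite ltnn.
    by rewrite ltnNge ltnW.
  have -> : [exists z in [set x; y], (z < y)%N] by apply/existsP; exists x; rewrite !inE eqxx.
  by rewrite /= ?subrr ?addNr.
- have -> : [exists z in [set x; y], (z < y)%N] = false.
    apply/negbTE/existsP => -[z]; rewrite !inE => /andP[/orP[]/eqP-> ].
      by rewrite ltnNge ltnW.
    by rewrite ltnn.
  have -> : [exists z in [set x; y], (z < x)%N] by apply/existsP; exists y; rewrite !inE eqxx orbT.
  by rewrite /= ?subrr ?addNr.
- by move/val_inj: exy nxy => ->; rewrite eqxx.
Qed.

Lemma sg_out (e : {set V}) (x : V) : x \notin e -> sg e x = 0.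
Proof. by rewrite /sg => /negbTE ->. Qed.


Lemma glap_decomp (E : {set {set V}}) (c : {set V} -> R') :
  (forall e, e \in E -> #|e| = 2%N) ->
  glap E c = \matrix_(i, j) \sum_e cE E c e * sg e i * sg e j.
Proof.
move=> simple; apply/matrixP => i j; rewrite !mxE.
have [<-|nij] := eqVneq i j.
- rewrite /= mul1r setUid.
  have -> : ([set i] \in E) = false.
    by apply/negP => /simple; rewrite cards1.
  rewrite subr0.
  rewrite [RHS](bigID (fun e => (e \in E) && (i \in e))) /= [RHS]addrC [X in _ = X + _]big1; last first.
    move=> e; rewrite /cE /sg; case: (e \in E); case: (i \in e) => //= _;
    by rewrite ?mulr0 ?mul0r.
  rewrite add0r.
  transitivity (\sum_(e | (e \in E) && (i \in e)) c e); last first.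
    by apply: eq_bigr => e /andP[eE ie]; rewrite /cE eE -mulrA sg_sq // mulr1.
  rewrite (bigID (fun k => [set i; k] \in E)) /= addrC big1; last first.
    by move=> k /negbTE h; rewrite mxE h.
  rewrite add0r.
  have -> : \sum_(k | [set i; k] \in E) gadj E c i k = \sum_(k | [set i; k] \in E) c [set i; k].
    by apply: eq_bigr => k h; rewrite mxE h.
  rewrite (eq_bigl (fun k => k \in [set k | [set i; k] \in E])); last by move=> k; rewrite inE.
  rewrite -(@big_imset _ _ _ _ _ (fun k => [set i; k]) [set k | [set i; k] \in E] c) /=; last first.
    move=> k k'; rewrite !inE => hk hk' eq.
    have nk : k != i.
      by apply/eqP => ki; move: hk; rewrite ki setUid => /simple; rewrite cards1.
    have : k \in [set i; k'] by rewrite -eq !inE eqxx orbT.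
    by rewrite !inE (negbTE nk) => /eqP.
  rewrite big_mkcond [RHS]big_mkcond /=.
  apply: eq_bigr => e _.
  have -> : (e \in [set [set i; x] | x in [set k | [set i; k] \in E]]) = (e \in E) && (i \in e).
    apply/imsetP/andP.
    - by move=> [k]; rewrite inE => hk ->; split => //; rewrite !inE eqxx.
    - move=> [eE ie]; have [x [y [nxy exy]]] := two_elt (simple _ eE).
      move: ie; rewrite exy !inE => /orP[]/eqP ->.
        by exists y; rewrite ?inE -exy.
      have e' : [set y; x] = e by rewrite exy setUC.
      by exists x; rewrite ?inE e' // -exy.
  by [].
- rewrite /= mul0r sub0r.
  rewrite (bigD1 [set i; j]) /=; last by [].
  rewrite big1; last first.
    move=> e ne; rewrite /cE; case: ifP => eE; last by rewrite !mul0r.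
    have [ie|nie] := boolP (i \in e); last by rewrite /sg (negbTE nie) mulr0 mul0r.
    have [je|nje] := boolP (j \in e); last by rewrite /sg (negbTE nje) mulr0.
    exfalso; have [x [y [nxy exy]]] := two_elt (simple _ eE).
    move: ie je ne; rewrite exy !inE => /orP[]/eqP ei /orP[]/eqP ej; subst i j;
      rewrite ?eqxx //; [by move: nij; rewrite eqxx | by rewrite setUC eqxx | by move: nij; rewrite eqxx].
  rewrite addr0 /cE; case: ifP => h; last by rewrite !mul0r oppr0.
  by rewrite -mulrA sg_pair // mulrN1.
Qed.

End Lap.

Lemma laplacian_glap (R : realFieldType) n E (c : {set 'I_n.+1} -> R) :
  laplacian E c = glap E c.
Proof. by []. Qed.


Section MTT.
Variable n : nat.
Notation V := 'I_n.+1.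
Variable r : V.
Variable R' : comPzRingType.

Lemma sum_lift (F : V -> R') : \sum_z F z = F r + \sum_(j < n) F (lift r j).
Proof.
rewrite (bigD1 r) //=; congr (_ + _).
have inj : {in [set: 'I_n] &, injective (lift r)} by move=> i j _ _; apply: lift_inj.
rewrite [RHS](eq_bigl (fun j => j \in [set: 'I_n])); last by move=> j; rewrite inE.
rewrite -(big_imset F inj) /=; apply: eq_bigl => z.
apply/idP/imsetP => [zr|[j _ ->]]; last by rewrite eq_sym neq_lift.
by case: (unliftP r z) zr => [j ->|->]; [exists j; rewrite ?inE | rewrite eqxx].
Qed.

Lemma prod0 (I : finType) (F : I -> R') i : F i = 0 -> \prod_j F j = 0.
Proof. by move=> h; rewrite (bigD1 i) //= h mul0r. Qed.

Lemma det0_vec m (A : 'M[R']_m) (u : 'cV[R']_m) k : A *m u = 0 -> u k 0 = 1 -> \det A = 0.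
Proof.
move=> h uk.
have := congr1 (fun M => (\adj A *m M) k 0) h.
by rewrite /= mulmxA mul_adj_mx mul_scalar_mx mulmx0 !mxE uk mulr1.
Qed.

Definition bmx (f : {ffun 'I_n -> {set V}}) : 'M[R']_n :=
  \matrix_(i, j) sg R' (f i) (lift r j).

Definition PT (F : {set {set V}}) : {ffun 'I_n -> {set V}} := [ffun i => pe r F i].

Lemma peS_PT F : peS r F = [set PT F i | i : 'I_n].
Proof. by apply: eq_imset => i; rewrite ffunE. Qed.

Lemma det_tree F : connectedb F -> \det (bmx (PT F)) = \prod_i sg R' (pe r F i) (lift r i).
Proof.
move=> c; rewrite /determinant (bigD1 1%g) //= [X in _ + X]big1 ?addr0.
  rewrite odd_perm1 expr0 mul1r; apply: eq_bigr => i _.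
  by rewrite mxE perm1 ffunE.
move=> s ns.
have [i ni] : exists i, lift r (s i) \notin pe r F i.
  case: (boolP [exists i, lift r (s i) \notin pe r F i]) => [/existsP //|/existsPn hall].
  exfalso; move/eqP: ns; apply.
  have hin i : lift r (s i) \in pe r F i by apply/negPn; apply: hall.
  pose a i := lvl r F (lift r (s i)); pose b i := lvl r F (lift r i).
  have hab i : (a i <= b i)%N.
    rewrite /a /b; move: (hin i); rewrite !inE => /orP[/eqP/lift_inj ->|/eqP ->]; first by [].
    by apply: ltnW; apply: par_lt => //; apply: liftnr.
  have sab : (\sum_i a i = \sum_i b i)%N.
    by rewrite [RHS](reindex_inj (@perm_inj _ s)).
  have h0 : (\sum_i (b i - a i) == 0)%N.
    by rewrite (sumnB _ (fun i _ => hab i)) sab subnn.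
  move: h0; rewrite sum_nat_eq0 => /forallP h0.
  apply/permP => i; rewrite perm1.
  move: (hin i) (h0 i); rewrite !inE => /orP[/eqP/lift_inj -> //|/eqP e].
  rewrite /a /b e subn_eq0 leqNgt => /negP; case.
  by apply: par_lt => //; apply: liftnr.
by rewrite (prod0 (i := i)) ?mulr0 // !mxE ffunE sg_out.
Qed.

Definition Phi (E : {set {set V}}) (c : {set V} -> R') (f : {ffun 'I_n -> {set V}}) : R' :=
  (\prod_i (cE E c (f i) * sg R' (f i) (lift r i))) * \det (bmx f).

Lemma Phi_tree (E : {set {set V}}) (c : {set V} -> R') (T : {set {set V}}) : (forall e, e \in E -> #|e| = 2%N) ->
  spanning_tree E T -> Phi E c (PT T) = \prod_(e in T) c e.
Proof.
move=> simple st; have /and3P[sTE cT _] := st.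
rewrite /Phi det_tree //.
under eq_bigr => i _ do rewrite ffunE.
rewrite big_split /= -mulrA -big_split /=.
rewrite -[in RHS](tree_peS r simple st).
rewrite big_imset /=; last by move=> i j _ _; apply: pe_inj.
rewrite -[RHS]mulr1; congr (_ * _).
  apply: eq_bigr => i _; rewrite /cE (subsetP sTE) //.
  exact: pe_in.
by apply: big1 => i _; apply: sg_sq; rewrite !inE eqxx.
Qed.

Lemma det_disconn (E : {set {set V}}) (f : {ffun 'I_n -> {set V}}) :
  (forall e, e \in E -> #|e| = 2%N) -> (forall i, f i \in E) ->
  ~~ connectedb [set f i | i : 'I_n] -> \det (bmx f) = 0.
Proof.
move=> simple fE; set S := [set f i | i : 'I_n] => cS.
have [x nx] : exists x, ~~ connect (edge_rel S) x r.
  case: (boolP [exists x, ~~ connect (edge_rel S) x r]) => [/existsP //|/existsPn h].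
  move/negP: cS; case.
  by apply: connected_r => x; apply/negPn; apply: h.
have xr : x != r by apply/eqP => e; move: nx; rewrite e connect0.
case: (unliftP r x) xr nx => [k ->|->]; last by rewrite eqxx.
move=> _ nk.
pose u : 'cV[R']_n := \col_j (connect (edge_rel S) (lift r j) (lift r k))%:R.
apply: (@det0_vec _ _ u k); last by rewrite mxE connect0.
apply/matrixP => i z; rewrite !mxE.
under eq_bigr => j _ do rewrite !mxE.
pose G y := sg R' (f i) y * (connect (edge_rel S) y (lift r k))%:R.
have -> : \sum_j sg R' (f i) (lift r j) * (connect (edge_rel S) (lift r j) (lift r k))%:R
      = \sum_y G y - G r by rewrite sum_lift addrC addKr.
have -> : G r = 0.
  by rewrite /G econn_sym; move: nk; rewrite econn_sym => /negbTE ->; rewrite mulr0.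
rewrite subr0.
have /cards2P [a [b [nab eab]]] : #|f i| == 2%N by rewrite simple.
rewrite (bigD1 a) // (bigD1 b); last by rewrite eq_sym.
rewrite big1 ?addr0; last first.
  move=> y /andP[/andP[_ ya] yb]; rewrite /G sg_out ?mul0r //.
  by rewrite eab !inE negb_or ya yb.
have cab : connect (edge_rel S) a (lift r k) = connect (edge_rel S) b (lift r k).
  have eS : edge_rel S a b by rewrite /edge_rel -eab; apply: imset_f.
  apply/idP/idP => h.
    by apply: connect_trans h; rewrite econn_sym; apply: connect1.
  by apply: connect_trans h; apply: connect1.
by rewrite /= addr0 /G cab -mulrDl eab sg_sum // mul0r.
Qed.

Lemma Phi_zero (E : {set {set V}}) (c : {set V} -> R') f : (forall e, e \in E -> #|e| = 2%N) ->
  f \notin [set PT T | T in spanning_trees E] -> Phi E c f = 0.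
Proof.
move=> simple nf; rewrite /Phi.
case: (boolP [forall i, f i \in E]) => [/forallP fE|/forallPn [i /negbTE h]]; last first.
  by rewrite (prod0 (i := i)) ?mul0r // /cE h mul0r.
case: (boolP [forall i, lift r i \in f i]) => [/forallP fv|/forallPn [i h]]; last first.
  by rewrite (prod0 (i := i)) ?mul0r // sg_out ?mulr0.
case: (boolP (injectiveb f)) => [/injectiveP finj|/injectiveP ninj]; last first.
  have [i [j [nij fij]]] : exists i j, i != j /\ f i = f j.
    case: (boolP [exists i, exists j, (i != j) && (f i == f j)]).
      by move=> /existsP [i /existsP [j /andP [nij /eqP fij]]]; exists i, j.
    move=> /existsPn h; exfalso; apply: ninj => i j fij.
    apply/eqP/negPn/negP => nij; move/existsPn: (h i) => /(_ j).
    by rewrite nij fij eqxx.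
  rewrite (@determinant_alternate _ _ _ i j) ?mulr0 //.
  by move=> k; rewrite !mxE fij.
set S := [set f i | i : 'I_n].
case: (boolP (connectedb S)) => cS; last by rewrite (det_disconn simple fE) ?mulr0.
have [st fe] := classify simple fE fv finj cS.
by move: nf; rewrite fe; move/negP; case; apply: imset_f; rewrite inE.
Qed.

Theorem mtt (E : {set {set V}}) (c : {set V} -> R') : (forall e, e \in E -> #|e| = 2%N) ->
  \det (\matrix_(i, j) glap E c (lift r i) (lift r j)) =
  \sum_(T in spanning_trees E) \prod_(e in T) c e.
Proof.
move=> simple.
have -> : \matrix_(i, j) glap E c (lift r i) (lift r j) =
   \matrix_(i, j) \sum_e cE E c e * sg R' e (lift r i) * sg R' e (lift r j).
  by apply/matrixP => i j; rewrite [glap E c]glap_decomp // !mxE.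
rewrite (det_sum_rank1 (cE E c) (fun e j => sg R' e (lift r j))).
rewrite (bigID (fun f => f \in [set PT T | T in spanning_trees E])) /=.
rewrite [X in _ + X]big1 ?addr0; last first.
  by move=> f nf; exact: (Phi_zero c simple nf).
have inj : {in spanning_trees E &, injective PT}.
  move=> T1 T2 s1 s2 e.
  rewrite inE in s1; rewrite inE in s2.
  by rewrite -(tree_peS r simple s1) -(tree_peS r simple s2) !peS_PT e.
rewrite big_imset //; apply: eq_bigr => T sT; rewrite inE in sT.
exact: (Phi_tree c simple sT).
Qed.

End MTT.


Section Alg.
Variable K : comNzRingType.

Lemma coef_prod_lin (I : eqType) (s : seq I) (a b : I -> K) : uniq s ->
  (\prod_(i <- s) ((a i)%:P + (b i)%:P * 'X))`_0 = \prod_(i <- s) a i /\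
  (\prod_(i <- s) ((a i)%:P + (b i)%:P * 'X))`_1 =
     \sum_(k <- s) b k * \prod_(i <- s | i != k) a i.
Proof.
elim: s => [|x s IH] /=; first by rewrite !big_nil coefC /= coefC.
move=> /andP[xs us]; have [h0 h1] := IH us.
have e : \prod_(i <- x :: s) ((a i)%:P + (b i)%:P * 'X) =
   (a x)%:P * \prod_(i <- s) ((a i)%:P + (b i)%:P * 'X) +
   (b x)%:P * ('X * \prod_(i <- s) ((a i)%:P + (b i)%:P * 'X)).
  by rewrite big_cons mulrDl mulrA.
rewrite e !coefD !coefCM !coefXM /= h0 h1.
split; first by rewrite big_cons mulr0 addr0.
rewrite [RHS]big_cons addrC; congr (_ + _).
  congr (_ * _); rewrite big_cons eqxx /= -[RHS]big_filter.
  have -> : [seq i <- s | i != x] = s.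
    apply/all_filterP/allP => i ismem /=.
    by apply/eqP => e'; move: xs; rewrite -e' ismem.
  by [].
rewrite big_distrr /=; apply: eq_big_seq => k ks.
rewrite big_cons.
have -> : (x != k) by apply/eqP => e'; move: xs; rewrite e' ks.
by rewrite mulrCA.
Qed.

Lemma coef_prod_linF (I : finType) (a b : I -> K) :
  (\prod_i ((a i)%:P + (b i)%:P * 'X))`_0 = \prod_i a i /\
  (\prod_i ((a i)%:P + (b i)%:P * 'X))`_1 = \sum_k b k * \prod_(i | i != k) a i.
Proof. exact: (coef_prod_lin a b (index_enum_uniq I)). Qed.

Lemma jacobi m (P Q : 'M[K]_m) :
  (\det (map_mx polyC P + 'X *: map_mx polyC Q))`_0 = \det P /\
  (\det (map_mx polyC P + 'X *: map_mx polyC Q))`_1 = \tr (\adj P *m Q).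
Proof.
rewrite /determinant !coef_sum.
have hs (s : 'S_m) : (-1) ^+ s * \prod_i (map_mx polyC P + 'X *: map_mx polyC Q) i (s i)
   = ((-1) ^+ s)%:P * \prod_i ((P i (s i))%:P + (Q i (s i))%:P * 'X).
  rewrite rmorphXn rmorphN rmorph1; congr (_ * _); apply: eq_bigr => i _.
  by rewrite !mxE mulrC.
split.
  apply: eq_bigr => s _; rewrite hs coefCM.
  by have [-> _] := coef_prod_linF (fun i => P i (s i)) (fun i => Q i (s i)).
under eq_bigr => s _ do rewrite hs coefCM (proj2 (coef_prod_linF (fun i => P i (s i)) (fun i => Q i (s i)))).
rewrite /mxtrace.
have -> : \sum_i (\adj P *m Q) i i = \sum_k \sum_j Q k j * cofactor P k j.
  under eq_bigr => i _ do rewrite !mxE.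
  rewrite exchange_big /=; apply: eq_bigr => k _; apply: eq_bigr => j _.
  by rewrite mxE mulrC.
pose Pk k := \matrix_(i, j) (if i == k then Q i j else P i j).
have cof k j : cofactor (Pk k) k j = cofactor P k j.
  rewrite /cofactor; congr (_ * \det _); apply/matrixP => a b.
  by rewrite !mxE eq_sym (negbTE (neq_lift _ _)).
have -> : \sum_k \sum_j Q k j * cofactor P k j = \sum_k \det (Pk k).
  apply: eq_bigr => k _; rewrite (expand_det_row _ k); apply: eq_bigr => j _.
  by rewrite cof mxE eqxx.
rewrite exchange_big /=; apply: eq_bigr => s _.
rewrite big_distrr /=; apply: eq_bigr => k _.
rewrite [X in _ = _ * X](bigD1 k) //= /Pk !mxE eqxx; congr (_ * (_ * _)).
by apply: eq_bigr => i ik; rewrite !mxE (negbTE ik).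
Qed.

Definition cm k m (M : 'M[{poly K}]_m) : 'M[K]_m := map_mx (fun p : {poly K} => p`_k) M.
Arguments cm k {m} M.

Lemma cm_mul0 m (M N : 'M[{poly K}]_m) : cm 0 (M *m N) = cm 0 M *m cm 0 N.
Proof.
apply/matrixP => i j; rewrite !mxE coef_sum; apply: eq_bigr => k _.
by rewrite !mxE coef0M.
Qed.

Lemma cm_mul1 m (M N : 'M[{poly K}]_m) :
  cm 1 (M *m N) = cm 0 M *m cm 1 N + cm 1 M *m cm 0 N.
Proof.
apply/matrixP => i j; rewrite !mxE coef_sum -big_split /=; apply: eq_bigr => k _.
by rewrite !mxE coefM big_ord_recr big_ord1 /= addrC.
Qed.

Lemma tr_coef k m (M : 'M[{poly K}]_m) : (\tr M)`_k = \tr (cm k M).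
Proof. by rewrite /mxtrace coef_sum; apply: eq_bigr => i _; rewrite mxE. Qed.

Lemma cm_lin0 m (A C : 'M[K]_m) : cm 0 (map_mx polyC A + 'X *: map_mx polyC C) = A.
Proof. by apply/matrixP => i j; rewrite !mxE coefD mulrC coefMX !coefC /= addr0. Qed.

Lemma cm_lin1 m (A C : 'M[K]_m) : cm 1 (map_mx polyC A + 'X *: map_mx polyC C) = C.
Proof. by apply/matrixP => i j; rewrite !mxE coefD mulrC coefMX !coefC /= add0r. Qed.

Lemma cm_scalar k m (a : {poly K}) : cm k (a%:M : 'M_m) = (a`_k)%:M.
Proof. by apply/matrixP => i j; rewrite !mxE coefMn. Qed.

Lemma cm0_adj m (M : 'M[{poly K}]_m) : cm 0 (\adj M) = \adj (cm 0 M).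
Proof. by rewrite /cm -(map_mx_adj (coefp 0)). Qed.

End Alg.
Arguments cm {K} k {m} M.

Section Field.
Variable R : fieldType.

Lemma adj_inv m (A : 'M[R]_m) : \det A != 0 -> \adj A = \det A *: invmx A.
Proof.
move=> dA; have uA : A \in unitmx by rewrite unitmxE unitfE.
by rewrite /invmx uA scalerA mulfV // scale1r.
Qed.

Lemma second_order m (A B C D : 'M[R]_m) : \det A != 0 ->
  let P := map_mx polyC A + 'X *: map_mx polyC C in
  let Q := map_mx polyC B + 'X *: map_mx polyC D in
  let M := map_mx polyC P + 'X *: map_mx polyC Q in
  (\det M)`_1`_0 = \det A * \tr (invmx A *m B) /\
  (\det M)`_1`_1 = \det A * (\tr (invmx A *m D) + \tr (invmx A *m C) * \tr (invmx A *m B)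
                     - \tr (invmx A *m C *m invmx A *m B)).
Proof.
move=> dA P Q M.
have uA : A \in unitmx by rewrite unitmxE unitfE.
have [_ h1] := jacobi P Q; rewrite /M h1 !tr_coef cm_mul0 cm_mul1 cm0_adj !cm_lin0 cm_lin1.
have [_ d1] := jacobi A C.
pose J1 := cm 1 (\adj P).
have hJ : J1 = ((\tr (\adj A *m C))%:M - \adj A *m C) *m invmx A.
  have := congr1 (cm 1) (mul_adj_mx P).
  rewrite cm_mul1 cm0_adj cm_lin0 cm_lin1 cm_scalar d1 -/J1 => e.
  by rewrite -e addrC addKr mulmxK.
rewrite -/J1 hJ adj_inv //.
split; first by rewrite -scalemxAl mxtraceZ.
rewrite !mulmxBl !mul_scalar_mx -!scalemxAl.
rewrite -scaleN1r !mxtraceD !mxtraceZ.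
ring.
Qed.

End Field.


Section W.
Variable n : nat.
Notation V := 'I_n.+1.
Variable r : V.
Variable E : {set {set V}}.

Definition Wm (K : comPzRingType) (c : {set V} -> K) : 'M[K]_n :=
  \matrix_(i, j) \sum_e cE E c e * sg K e (lift r i) * sg K e (lift r j).

Lemma mttW (K : comPzRingType) (c : {set V} -> K) : (forall e, e \in E -> #|e| = 2%N) ->
  \det (Wm c) = \sum_(T in spanning_trees E) \prod_(e in T) c e.
Proof.
move=> simple; rewrite -(mtt r c simple); congr (\det _).
by apply/matrixP => i j; rewrite [in RHS]mxE [glap E c]glap_decomp // !mxE.
Qed.

Lemma sg_map (K1 K2 : comPzRingType) (f : {rmorphism K1 -> K2}) (e : {set V}) (z : V) :
  f (sg K1 e z) = sg K2 e z.
Proof. by rewrite /sg; case: ifP => _; [case: ifP => _|]; rewrite ?rmorphN ?rmorph1 ?rmorph0. Qed.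

Lemma Wm_lin (K1 K2 : comPzRingType) (f : {rmorphism K1 -> K2}) (x : K2) c1 c2 :
  Wm (fun e => f (c1 e) + x * f (c2 e)) = map_mx f (Wm c1) + x *: map_mx f (Wm c2).
Proof.
apply/matrixP => i j; rewrite !mxE !rmorph_sum big_distrr -big_split /=.
apply: eq_bigr => e _; rewrite !rmorphM !sg_map /cE.
case: ifP => _; rewrite ?rmorph0 ?mulr0 ?mul0r ?addr0 //.
  by rewrite !mulrDl !mulrA.
by rewrite mulr0 addr0.
Qed.

Lemma Wm_ext (K : comPzRingType) (c c' : {set V} -> K) : {in E, c =1 c'} -> Wm c = Wm c'.
Proof.
move=> h; apply/matrixP => i j; rewrite !mxE; apply: eq_bigr => e _.
by rewrite /cE; case: ifP => // eE; rewrite h.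
Qed.

Lemma delrc_W (R : realFieldType) (c : {set V} -> R) : (forall e, e \in E -> #|e| = 2%N) ->
  delrc r (laplacian E c) = Wm c.
Proof.
move=> simple; apply/matrixP => i j; rewrite /delrc laplacian_glap [glap E c]glap_decomp //.
by rewrite !mxE.
Qed.

End W.


Lemma coef_prod_in (K : comNzRingType) (I : finType) (P : pred I) (b : I -> K) :
  (\prod_(i | P i) (1 + (b i)%:P * 'X))`_0 = 1 /\
  (\prod_(i | P i) (1 + (b i)%:P * 'X))`_1 = \sum_(i | P i) b i.
Proof.
rewrite -big_filter -[\sum_(i | P i) b i]big_filter.
have := coef_prod_lin (fun _ => (1 : K)) b (filter_uniq P (index_enum_uniq I)).
rewrite polyC1 => -[-> ->]; split; first by rewrite big1.
by apply: eq_bigr => i _; rewrite big1 ?mulr1.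
Qed.

Section Final.
Variable R : realFieldType.
Variable n : nat.
Notation V := 'I_n.+1.
Variable r : V.
Variable E : {set {set V}}.

Lemma prod_coef (T : {set {set V}}) (w a b : {set V} -> R) :
 ((\prod_(e in T) (((w e)%:P * (1 + (b e)%:P * 'X))%:P * (1 + ((a e)%:P)%:P * 'X)))`_1)`_0
   = (\prod_(e in T) w e) * \sum_(e in T) a e /\
 ((\prod_(e in T) (((w e)%:P * (1 + (b e)%:P * 'X))%:P * (1 + ((a e)%:P)%:P * 'X)))`_1)`_1
   = (\prod_(e in T) w e) * (\sum_(e in T) b e) * (\sum_(e in T) a e).
Proof.
rewrite big_split /= -rmorph_prod big_split /= -rmorph_prod coefCM.
have [_ ->] := coef_prod_in (fun e => e \in T) (fun e => (a e)%:P).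
rewrite -rmorph_sum !coefMC !coefCM.
have [-> ->] := coef_prod_in (fun e => e \in T) b.
by split; first rewrite mulr1.
Qed.

Lemma moments (w a b : {set V} -> R) : (forall e, e \in E -> #|e| = 2%N) ->
  \det (Wm r E w) != 0 ->
  let X := invmx (Wm r E w) in
  \sum_(T in spanning_trees E) (\prod_(e in T) w e) * \sum_(e in T) a e =
    \det (Wm r E w) * \tr (X *m Wm r E (fun e => w e * a e)) /\
  \sum_(T in spanning_trees E) (\prod_(e in T) w e) * (\sum_(e in T) b e) * (\sum_(e in T) a e) =
    \det (Wm r E w) * (\tr (X *m Wm r E (fun e => w e * a e * b e))
      + \tr (X *m Wm r E (fun e => w e * b e)) * \tr (X *m Wm r E (fun e => w e * a e))
      - \tr (X *m Wm r E (fun e => w e * b e) *m X *m Wm r E (fun e => w e * a e))).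
Proof.
move=> simple dA X.
pose c2 e : {poly {poly R}} := (((w e)%:P * (1 + (b e)%:P * 'X))%:P * (1 + ((a e)%:P)%:P * 'X)).
pose cP e : {poly R} := (w e)%:P + 'X * (w e * b e)%:P.
pose cQ e : {poly R} := (w e * a e)%:P + 'X * (w e * a e * b e)%:P.
have hc : Wm r E c2 = map_mx polyC (map_mx polyC (Wm r E w) + 'X *: map_mx polyC (Wm r E (fun e => w e * b e)))
     + 'X *: map_mx polyC (map_mx polyC (Wm r E (fun e => w e * a e)) + 'X *: map_mx polyC (Wm r E (fun e => w e * a e * b e))).
  rewrite -!(Wm_lin _ _ polyC).
  apply: Wm_ext => e _; rewrite /c2.
  rewrite !rmorphD !rmorphM /= !rmorphD !rmorphM /= ?rmorph1 ?polyCX.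
  ring.
have [h0 h1] := second_order (Wm r E (fun e => w e * a e)) (Wm r E (fun e => w e * b e))
    (Wm r E (fun e => w e * a e * b e)) dA.
rewrite -hc mttW // !coef_sum in h0 h1.
split.
  rewrite -h0; apply: eq_bigr => T _.
  by have [-> _] := prod_coef T w a b.
rewrite -h1; apply: eq_bigr => T _.
by have [_ ->] := prod_coef T w a b.
Qed.

End Final.


Theorem theorem3 (R : realFieldType) (n : nat) (E : {set {set 'I_n.+1}})
  (w om : {set 'I_n.+1} -> R) (r : 'I_n.+1) :
  simple_graph E ->
  connectedb E ->
  (forall e, e \in E -> 0 < w e) ->
  let LGr := delrc r (laplacian E w) in
  let L1 v := delrc r (lapv E w om 1 v) in
  let L2 v := delrc r (lapv E w om 2 v) in
  (forall v : 'I_n.+1,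
     tree_expect E w (fun T => wdeg om T v) = \tr (L1 v *m invmx LGr)
  /\ tree_var E w (fun T => wdeg om T v)
       = \tr ((L2 v - L1 v *m invmx LGr *m L1 v) *m invmx LGr))
  /\
  (forall v u : 'I_n.+1, u != v ->
     tree_cov E w (fun T => wdeg om T v) (fun T => wdeg om T u)
       = \tr ((delrc r (lapvu E w om v u) - L1 v *m invmx LGr *m L1 u)
              *m invmx LGr)).
Proof.
move=> sim cE wpos LGr L1 L2.
pose A := Wm r E w.
have hA : LGr = A by rewrite /LGr delrc_W.
pose av (v : 'I_n.+1) (e : {set 'I_n.+1}) := if v \in e then om e else 0.
have hL1 v : L1 v = Wm r E (fun e => w e * av v e).
  rewrite /L1 /lapv delrc_W //; apply: Wm_ext => e _.
  by rewrite /av; case: ifP; rewrite ?expr1 ?mulr0.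
have hL2 v : L2 v = Wm r E (fun e => w e * av v e * av v e).
  rewrite /L2 /lapv delrc_W //; apply: Wm_ext => e _.
  by rewrite /av; case: ifP; rewrite ?mulr0 // -mulrA -expr2.
have hLvu v u : u != v -> delrc r (lapvu E w om v u) = Wm r E (fun e => w e * av u e * av v e).
  move=> nuv; rewrite /lapvu delrc_W //; apply: Wm_ext => e eE.
  have /cards2P [x [y [nxy exy]]] : #|e| == 2%N by rewrite sim.
  rewrite /av; case: eqP => [->|ne].
    by rewrite !inE !eqxx orbT /= -mulrA -expr2.
  case: ifP => ue; last by rewrite mulr0 mul0r.
  case: ifP => ve; last by rewrite mulr0.
  exfalso; apply: ne; move: ue ve; rewrite exy !inE.
  move=> /orP[]/eqP eu /orP[]/eqP ev; subst; rewrite ?eqxx // in nuv.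
  by rewrite setUC.
have Zdet : \det A = \sum_(T in spanning_trees E) tree_weight w T by rewrite mttW.
have [T0 T0in] := tree_exists cE.
have twpos T : T \in spanning_trees E -> 0 < tree_weight w T.
  rewrite inE => /and3P[sTE _ _]; apply: prodr_gt0 => e eT.
  by apply: wpos; apply: (subsetP sTE).
have Zpos : 0 < \sum_(T in spanning_trees E) tree_weight w T.
  rewrite (bigD1 T0) //=.
  have h1 := twpos T0 T0in.
  have h2 : 0 <= \sum_(T in spanning_trees E | T != T0) tree_weight w T.
    by apply: sumr_ge0 => T /andP[Tin _]; apply: ltW; apply: twpos.
  lra.
set Z := \sum_(T in spanning_trees E) tree_weight w T in Zdet Zpos.
have dA : \det A != 0 by rewrite Zdet; apply: lt0r_neq0.
have Zn0 : Z != 0 by apply: lt0r_neq0.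
pose X := invmx A.
have hw T v : wdeg om T v = \sum_(e in T) av v e by rewrite /wdeg big_mkcondr.
have num1 v : \sum_(F in spanning_trees E) tree_weight w F * wdeg om F v
    = Z * \tr (X *m Wm r E (fun e => w e * av v e)).
  have [m1 _] := moments (av v) (av v) sim dA.
  by rewrite -Zdet -m1; apply: eq_bigr => T _; rewrite hw.
have num2 v u : \sum_(F in spanning_trees E) tree_weight w F * (wdeg om F v * wdeg om F u)
    = Z * (\tr (X *m Wm r E (fun e => w e * av u e * av v e))
      + \tr (X *m Wm r E (fun e => w e * av v e)) * \tr (X *m Wm r E (fun e => w e * av u e))
      - \tr (X *m Wm r E (fun e => w e * av v e) *m X *m Wm r E (fun e => w e * av u e))).
  have [_ m2] := moments (av u) (av v) sim dA.
  by rewrite -Zdet -m2; apply: eq_bigr => T _; rewrite !hw mulrA.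
have E1 v : tree_expect E w (fun T => wdeg om T v) = \tr (X *m Wm r E (fun e => w e * av v e)).
  by rewrite /tree_expect num1 -/Z mulrC mulKf.
split.
  move=> v; split.
    by rewrite E1 hL1 hA mxtrace_mulC.
  rewrite /tree_var E1.
  have -> : tree_expect E w (fun F => wdeg om F v ^+ 2) =
     (\sum_(F in spanning_trees E) tree_weight w F * (wdeg om F v * wdeg om F v)) / Z.
    by rewrite /tree_expect -/Z; congr (_ / _); apply: eq_bigr => T _; rewrite expr2.
  rewrite num2 hL1 hL2 hA -/X.
  rewrite mulmxBl -scaleN1r mxtraceD mxtraceZ.
  rewrite [\tr (Wm r E _ *m X)]mxtrace_mulC.
  rewrite [\tr (Wm r E _ *m X *m Wm r E _ *m X)]mxtrace_mulC !mulmxA.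
  set t1 := \tr (X *m Wm r E (fun e => w e * av v e)).
  set t2 := \tr (X *m Wm r E (fun e => w e * av v e * av v e)).
  set t3 := \tr (X *m Wm r E (fun e => w e * av v e) *m X *m Wm r E (fun e => w e * av v e)).
  field; exact: Zn0.
move=> v u nuv.
rewrite /tree_cov !E1.
have -> : tree_expect E w (fun F => wdeg om F v * wdeg om F u) =
   (\sum_(F in spanning_trees E) tree_weight w F * (wdeg om F v * wdeg om F u)) / Z.
  by [].
rewrite num2 hLvu // !hL1 hA -/X.
rewrite mulmxBl -scaleN1r mxtraceD mxtraceZ.
rewrite [\tr (Wm r E _ *m X)]mxtrace_mulC.
rewrite [\tr (Wm r E _ *m X *m Wm r E _ *m X)]mxtrace_mulC !mulmxA.
field; exact: Zn0.
Qed.
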